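(* Assume the standing assumptions. Let $\bar u$ be a local solution of (P) with radius $\rho>0$, let $\epsilon_k>0$ with $\epsilon_k\to0$, let $u_k$ be a global solution of $\min\{\Phi_{\epsilon_k}(u)+\frac12\|u-\bar u\|_{L^2(\Omega)}^2:\ u\in V,\ \|u-\bar u\|_V\le\rho\}$, and let $\lambda_k\in V^*$, $\langle\lambda_k,v\rangle_{V^*,V}:=\int_\Omega 2u_k\psi_{\epsilon_k}'(u_k^2)v\,dx$. Suppose $u_k\to\bar u$ in $V$ and $\lambda_k\to\bar\lambda$ in $V^*$. Then \[ \langle\lambda_k,u_k\rangle_{V^*,V}\to\langle\bar\lambda,\bar u\rangle_{V^*,V}=p\int_\Omega|\bar u|^p\,dx . \]
   Context: Standing assumptions: $\Omega\subset\mathbb R^d$ bounded Lipschitz domain; $V$ real Hilbert space with inner product $\langle\cdot,\cdot\rangle_V$, $V\subset L^2(\Omega)$ with compact and dense embedding; $V^*$ dual with pairing $\langle\cdot,\cdot\rangle_{V^*,V}$. $F:V\to\mathbb R$ weakly lower semicontinuous, bounded below by an affine function, continuously Fréchet differentiable. $\alpha>0$, $\beta>0$, $p\in(0,1)$. For $\epsilon>0$, $\psi_\epsilon(t)=\frac p2\frac{t}{\epsilon^{2-p}}+(1-\frac p2)\epsilon^p$ if $t\in[0,\epsilon^2)$ and $\psi_\epsilon(t)=t^{p/2}$ if $t\ge\epsilon^2$, with $\psi_\epsilon'(t)=\frac p2\min(\epsilon^{p-2},t^{(p-2)/2})$; $\psi_0(t)=t^{p/2}$. $G_\epsilon(u):=\int_\Omega\psi_\epsilon(|u|^2)\,dx$,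 $\Phi_\epsilon(u):=F(u)+\frac\alpha2\|u\|_V^2+\beta G_\epsilon(u)$ for $\epsilon\ge0$. (P) is $\min_{u\in V}\Phi_0(u)$; $\bar u$ is a local solution with radius $\rho$ if $\Phi_0(\bar u)\le\Phi_0(u)$ whenever $\|u-\bar u\|_V\le\rho$. *)

(* Defs.v *)
From HB Require Import structures.
From mathcomp Require Import all_boot all_order all_algebra.
From mathcomp Require Import all_classical all_reals all_analysis.
Set Implicit Arguments. Unset Strict Implicit. Unset Printing Implicit Defensive.
Import Order.TTheory GRing.Theory Num.Theory.
Import numFieldNormedType.Exports.
Local Open Scope classical_set_scope.
Local Open Scope ring_scope.

Section Euclid.
Variables (R : realType) (d : nat).

Definition box (a b : 'rV[R]_d) : set 'rV[R]_d :=
  [set x | forall i, a ord0 i < x ord0 i <= b ord0 i].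
Definition boxes : set (set 'rV[R]_d) := [set box a b | a in setT & b in setT].

(* R^d equipped with the sigma-algebra generated by boxes (= Borel sets) *)
Definition Rd : measurableType _ := g_sigma_algebraType boxes.

(* mu is Lebesgue measure: it gives boxes their volume (this determines
   mu uniquely on the Borel sets) *)
Definition is_lebesgue (mu : {measure set Rd -> \bar R}) : Prop :=
  forall a b : 'rV[R]_d, (forall i, a ord0 i <= b ord0 i) ->
    mu (box a b) = (\prod_(i < d) (b ord0 i - a ord0 i))%:E.

(* bounded Lipschitz domain: open, bounded, and near every boundary point
   it lies (after a rigid motion) below the graph of a Lipschitz function *)
Definition bounded_lipschitz_domain (O : set 'rV[R]_d) : Prop :=
  open O /\
  (exists M : R, forall x, O x -> `|x| <= M) /\
  (forall x, closure O x -> ~ O x ->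
     exists r : R, 0 < r /\
     exists Q : 'M[R]_d, Q *m Q^T = 1%:M /\
     exists j : 'I_d, exists g : 'rV[R]_d -> R, exists L : R,
       (forall z z' : 'rV[R]_d, `|g z - g z'| <= L * `|z - z'|) /\
       (forall z z' : 'rV[R]_d, (forall i, i != j -> z ord0 i = z' ord0 i) -> g z = g z') /\
       (forall y : 'rV[R]_d, `|y - x| < r ->
          (O y <-> ((y - x) *m Q) ord0 j < g ((y - x) *m Q)))).
End Euclid.

Section Hilbert.
Variables (R : realType) (V : lmodType R) (ip : V -> V -> R).

Definition vnorm (v : V) : R := Num.sqrt (ip v v).

Definition is_hilbert : Prop :=
  (forall u v, ip u v = ip v u) /\
  (forall a u v w, ip (a *: u + v) w = a * ip u w + ip v w) /\
  (forall v, v != 0 -> 0 < ip v v) /\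
  (forall s : nat -> V,
     (forall e : R, 0 < e -> exists N, forall m n, (N <= m)%N -> (N <= n)%N ->
        vnorm (s m - s n) < e) ->
     exists l : V, (fun n => vnorm (s n - l)) @ \oo --> (0 : R)).

Definition in_dual (f : V -> R) : Prop :=
  (forall a u v, f (a *: u + v) = a * f u + f v) /\
  (exists C : R, forall v, `|f v| <= C * vnorm v).

Definition dual_cvg (f : nat -> V -> R) (g : V -> R) : Prop :=
  forall e : R, 0 < e -> exists N, forall k, (N <= k)%N ->
    forall v, `|f k v - g v| <= e * vnorm v.

Definition weakly_lsc (F : V -> R) : Prop :=
  forall v (c : R), c < F v ->
    exists (ls : seq (V -> R)) (delta : R),
      (forall l, l \in ls -> in_dual l) /\ 0 < delta /\
      forall u, (forall l, l \in ls -> `|l (u - v)| < delta) -> c < F u.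

Definition bounded_below_affine (F : V -> R) : Prop :=
  exists (l : V -> R) (c : R), in_dual l /\ forall u, l u + c <= F u.

Definition C1_frechet (F : V -> R) : Prop :=
  exists DF : V -> V -> R,
    (forall u, in_dual (DF u)) /\
    (forall u (e : R), 0 < e -> exists delta : R, 0 < delta /\
       forall h, vnorm h < delta ->
         `|F (u + h) - F u - DF u h| <= e * vnorm h) /\
    (forall u (e : R), 0 < e -> exists delta : R, 0 < delta /\
       forall w, vnorm (w - u) < delta ->
         forall h, `|DF w h - DF u h| <= e * vnorm h).
End Hilbert.

Section Embedding.
Variables (R : realType) (d : nat) (mu : {measure set (Rd R d) -> \bar R})
  (O : set (Rd R d)).

Definition L2 (f : Rd R d -> R) : Prop :=
  measurable_fun O f /\ mu.-integrable O (fun x => (f x ^+ 2)%:E).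

Definition L2norm2 (f : Rd R d -> R) : R := \int[mu]_(x in O) (f x ^+ 2).

Variables (V : lmodType R) (ip : V -> V -> R) (iota : V -> Rd R d -> R).

Definition compact_dense_embedding : Prop :=
  (forall v, L2 (iota v)) /\
  (forall a u v x, iota (a *: u + v) x = a * iota u x + iota v x) /\
  (forall v, L2norm2 (iota v) = 0 -> v = 0) /\
  (exists C : R, forall v, L2norm2 (iota v) <= C * (vnorm ip v) ^+ 2) /\
  (forall s : nat -> V, (exists M : R, forall n, vnorm ip (s n) <= M) ->
     exists (phi : nat -> nat) (f : Rd R d -> R),
       (forall n m, (n < m)%N -> (phi n < phi m)%N) /\ L2 f /\
       (fun n => L2norm2 (fun x => iota (s (phi n)) x - f x)) @ \oo --> (0 : R)) /\
  (forall f, L2 f -> forall e : R, 0 < e ->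
     exists v, L2norm2 (fun x => iota v x - f x) < e).

Variable (p : R).
Definition psi (eps t : R) : R :=
  if (0 < eps) && (t < eps ^+ 2)
  then p / 2 * t / eps `^ (2 - p) + (1 - p / 2) * eps `^ p
  else t `^ (p / 2).
Definition dpsi (eps t : R) : R :=
  if t < eps ^+ 2 then p / 2 * eps `^ (p - 2)
  else p / 2 * t `^ ((p - 2) / 2).

Definition Geps (eps : R) (u : V) : R :=
  \int[mu]_(x in O) psi eps (iota u x ^+ 2).

Variables (F : V -> R) (alpha beta : R).
Definition Phi (eps : R) (u : V) : R :=
  F u + alpha / 2 * (vnorm ip u) ^+ 2 + beta * Geps eps u.

Definition local_solution (ubar : V) (rho : R) : Prop :=
  forall u, vnorm ip (u - ubar) <= rho -> Phi 0 ubar <= Phi 0 u.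

Definition reg_global_solution (eps : R) (ubar : V) (rho : R) (u : V) : Prop :=
  vnorm ip (u - ubar) <= rho /\
  forall w, vnorm ip (w - ubar) <= rho ->
    Phi eps u + 1 / 2 * L2norm2 (fun x => iota u x - iota ubar x)
    <= Phi eps w + 1 / 2 * L2norm2 (fun x => iota w x - iota ubar x).

Definition lam (eps : R) (u : V) (v : V) : R :=
  \int[mu]_(x in O) (2 * iota u x * dpsi eps (iota u x ^+ 2) * iota v x).
End Embedding.

(* Main.v *)
Require Import Defs.
From HB Require Import structures.
From mathcomp Require Import all_boot all_order all_algebra.
From mathcomp Require Import all_classical all_reals all_analysis.
From mathcomp Require Import ring lra measurable_realfun.
Import Order.TTheory GRing.Theory Num.Theory.
Import numFieldNormedType.Exports.
Local Open Scope classical_set_scope.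
Local Open Scope ring_scope.
Set Implicit Arguments. Unset Strict Implicit.

Lemma pow2R (R : realType) (x : R) : 0 <= x -> x `^ 2 = x ^+ 2.
Proof. by move=> x0; rewrite -powR_mulrn. Qed.

Lemma powR_decr (R : realType) (x y q : R) : 0 < x -> x <= y -> q <= 0 ->
  y `^ q <= x `^ q.
Proof.
move=> x0 xy q0.
have y0 : 0 < y by apply: lt_le_trans xy.
have nq : 0 <= - q by rewrite oppr_ge0.
have ey : y `^ q = (y `^ (- q))^-1 by rewrite -powRN opprK.
have ex : x `^ q = (x `^ (- q))^-1 by rewrite -powRN opprK.
rewrite ey ex lef_pV2 ?posrE ?powR_gt0 //.
exact: (ge0_ler_powR nq (ltW x0) (ltW y0) xy).
Qed.

Lemma powR_subadd (R : realType) (x y p : R) : 0 < p <= 1 -> 0 <= x -> 0 <= y ->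
  (x + y) `^ p <= x `^ p + y `^ p.
Proof.
move=> /andP[p0 p1] x0 y0.
have [s0|s0] := eqVneq (x + y) 0.
  have hx : x = 0 by lra. have hy : y = 0 by lra.
  by rewrite hx hy addr0 powR0 ?gt_eqF // addr0.
have sp : 0 < x + y by rewrite lt_neqAle eq_sym s0 addr_ge0.
have key : forall z, 0 <= z -> z <= x + y -> z * (x + y) `^ (p - 1) <= z `^ p.
  move=> z z0 zs; have [->|zn0] := eqVneq z 0; first by rewrite mul0r powR0 ?gt_eqF.
  have zp : 0 < z by rewrite lt_neqAle eq_sym zn0.
  rewrite -(mulr_powRB1 z0 p0) ler_wpM2l //; apply: powR_decr => //; lra.
rewrite -(mulr_powRB1 (ltW sp) p0) mulrDl.
apply: lerD; apply: key => //; lra.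
Qed.

Lemma powR_absdiff (R : realType) (a b p : R) : 0 < p <= 1 ->
  `| `|a| `^ p - `|b| `^ p | <= `|a - b| `^ p.
Proof.
move=> hp.
have hp0 : 0 <= p by case/andP: hp => h _; exact: ltW.
have gen : forall x y : R, `|x| `^ p <= `|x - y| `^ p + `|y| `^ p.
  move=> x y; apply: le_trans; last exact: (powR_subadd hp (normr_ge0 (x - y)) (normr_ge0 y)).
  apply: (ge0_ler_powR hp0); rewrite ?nnegrE ?addr_ge0 ?normr_ge0 //.
  by have := ler_normD (x - y) y; rewrite subrK.
have := gen a b; have := gen b a; rewrite distrC => h1 h2.
rewrite ler_norml; apply/andP; split; lra.
Qed.

Lemma powR_split (R : realType) (w dl p : R) : 0 < dl -> 0 < p -> p <= 2 ->
  `|w| `^ p <= dl `^ p + dl `^ (p - 2) * w ^+ 2.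
Proof.
move=> d0 p0 p2.
have h0 : 0 <= dl `^ (p - 2) * w ^+ 2 by rewrite mulr_ge0 ?powR_ge0 ?sqr_ge0.
have [wd|wd] := leP `|w| dl.
  have : `|w| `^ p <= dl `^ p.
    by apply: (ge0_ler_powR (ltW p0)) => //; rewrite nnegrE ?normr_ge0 ?ltW.
  have := powR_ge0 dl p; lra.
have wn0 : `|w| != 0 by apply: lt0r_neq0; apply: lt_trans wd.
have -> : `|w| `^ p = `|w| `^ 2 * `|w| `^ (p - 2).
  by rewrite -powRD ?wn0 ?implybT // addrC subrK.
rewrite pow2R ?normr_ge0 // real_normK ?num_real // mulrC.
have : `|w| `^ (p - 2) * w ^+ 2 <= dl `^ (p - 2) * w ^+ 2.
  rewrite ler_wpM2r ?sqr_ge0 //; apply: powR_decr => //; [exact: ltW|lra].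
have := powR_ge0 dl p; lra.
Qed.

Lemma sq_powR (R : realType) (y q : R) : (y ^+ 2) `^ (q / 2) = `|y| `^ q.
Proof.
rewrite -real_normK ?num_real // -pow2R // -powRrM; congr (_ `^ _).
by rewrite mulrC mulfVK // pnatr_eq0.
Qed.

Lemma hbound (R : realType) (p e y : R) : 0 < p -> 0 < e ->
 `|2 * y * dpsi p e (y ^+ 2) * y - p * (`|y| `^ p)| <= p * e `^ p.
Proof.
move=> p0 e0; rewrite /dpsi.
have ep : e `^ (p - 2) * e ^+ 2 = e `^ p.
  by rewrite -pow2R ?ltW // -powRD ?gt_eqF ?implybT // subrK.
case: ltP => H.
- have hy : `|y| < e.
    by rewrite -ltr_sqr ?nnegrE ?normr_ge0 ?ltW // real_normK ?num_real.
  have h1 : 2 * y * (p / 2 * e `^ (p - 2)) * y = p * (y ^+ 2 * e `^ (p - 2)) by field.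
  rewrite h1.
  have h2 : 0 <= y ^+ 2 * e `^ (p - 2) <= e `^ p.
    rewrite mulr_ge0 ?sqr_ge0 ?powR_ge0 //= -ep mulrC ler_wpM2l ?powR_ge0 // ltW //.
  have h3 : 0 <= `|y| `^ p <= e `^ p.
    rewrite powR_ge0 /= ge0_ler_powR ?ltW // ?nnegrE ?normr_ge0 // ltW //.
  have := powR_ge0 e p.
  move: h2 h3 => /andP[a1 a2] /andP[a3 a4] a5.
  rewrite ler_norml; apply/andP; split; nra.
- have hy0 : y ^+ 2 != 0 by apply: lt0r_neq0; apply: lt_le_trans H; rewrite exprn_gt0.
  have : 2 * y * (p / 2 * (y ^+ 2) `^ ((p - 2) / 2)) * y = p * (`|y| `^ p).
    have -> : 2 * y * (p / 2 * (y ^+ 2) `^ ((p - 2) / 2)) * y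
      = p * ((y ^+ 2) `^ 1 * (y ^+ 2) `^ ((p - 2) / 2)).
      by rewrite powRr1 ?sqr_ge0 //; field.
    by rewrite -powRD ?hy0 ?implybT // -sq_powR; congr (_ * (_ `^ _)); field.
  move=> ->; rewrite subrr normr0 mulr_ge0 ?ltW ?powR_gt0 //.
Qed.

Definition hfun (R : realType) (p e : R) (y : R) := 2 * y * dpsi p e (y ^+ 2) * y.

Lemma meas_h (R : realType) (p e : R) : measurable_fun [set: R] (hfun p e).
Proof.
rewrite /hfun.
apply: measurable_realfun.measurable_funM; last exact: measurable_id.
apply: measurable_realfun.measurable_funM; first by apply: measurable_realfun.measurable_funM => //; exact: measurable_id.
change (measurable_fun setT (dpsi p e \o (fun y : R => y ^+ 2))).
apply: measurableT_comp; last exact: measurable_realfun.exprn_measurable.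
rewrite /dpsi; apply: measurable_fun_ifT.
- by apply: measurable_realfun.measurable_fun_ltr => //; exact: measurable_id.
- exact: measurable_cst.
- by apply: measurable_realfun.measurable_funM => //; exact: measurable_powR.
Qed.

Lemma h_le (R : realType) (p e y : R) : 0 < p -> 0 < e -> p <= 2 ->
  `|hfun p e y| <= p * e `^ p + p + p * y ^+ 2.
Proof.
move=> p0 e0 p2.
have h1 := hbound y p0 e0.
have h2 := powR_split y ltr01 p0 p2.
rewrite powR1 /= mul1r in h2.
have h3 : `|hfun p e y| <= `|hfun p e y - p * `|y| `^ p| + p * `|y| `^ p.
  have := ler_normD (hfun p e y - p * `|y| `^ p) (p * `|y| `^ p).
  rewrite subrK (@ger0_norm _ (p * _)) //; apply: mulr_ge0; [exact: ltW|exact: powR_ge0].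
rewrite /hfun in h3 *; nra.
Qed.

Lemma cst_int d' (T : measurableType d') (R : realType) (mu : {measure set T -> \bar R})
  (D : set T) (k : R) : measurable D -> (mu D < +oo)%E -> mu.-integrable D (EFin \o cst k).
Proof.
move=> mD muD; apply/integrableP; split; first by apply/measurable_EFinP; exact: measurable_cst.
rewrite (eq_integral (cst `|k|%:E)); last by move=> x _ /=.
rewrite integral_cst //; apply: lte_mul_pinfty => //.
Qed.

Lemma est d' (T : measurableType d') (R : realType) (mu : {measure set T -> \bar R})
  (D : set T) (a b : T -> R) (p e dl : R) :
  measurable D -> (mu D < +oo)%E -> 0 < p -> p <= 1 -> 0 < e -> 0 < dl ->
  measurable_fun D a -> measurable_fun D b ->
  mu.-integrable D (fun x => (a x ^+ 2)%:E) -> mu.-integrable D (fun x => (b x ^+ 2)%:E) ->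
  mu.-integrable D (fun x => ((a x - b x) ^+ 2)%:E) ->
  `|\int[mu]_(x in D) hfun p e (a x) - p * \int[mu]_(x in D) (`|b x| `^ p)|
   <= (p * e `^ p + p * dl `^ p) * fine (mu D)
      + p * dl `^ (p - 2) * \int[mu]_(x in D) ((a x - b x) ^+ 2).
Proof.
move=> mD muD p0 p1 e0 d0 ma mb ia ib iab.
have p2 : p <= 2 by lra.
have hp : 0 < p <= 1 by rewrite p0 p1.
have mh : measurable_fun D (fun x => hfun p e (a x)).
  exact: (measurableT_comp (meas_h p e) ma).
have mpb : measurable_fun D (fun x => p * `|b x| `^ p).
  apply: measurable_realfun.measurable_funM => //.
  apply: (measurableT_comp (measurable_powR _)).
  by apply: measurableT_comp.
have intg : forall (c k : R) (f : T -> R), mu.-integrable D (fun x => (f x ^+ 2)%:E) ->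
    mu.-integrable D (EFin \o (fun x => c + k * f x ^+ 2)).
  move=> c k f hf.
  have -> : EFin \o (fun x => c + k * f x ^+ 2) =
     (fun x : T => ((EFin \o cst c) x + k%:E * (f x ^+ 2)%:E)%E).
    by apply/funext => x /=; rewrite EFinD EFinM.
  apply: (integrableD mD (cst_int _ mD muD)).
  exact: integrableZl.
have int_h : mu.-integrable D (EFin \o (fun x => hfun p e (a x))).
  apply: (@le_integrable _ _ _ mu D mD _ (EFin \o (fun x => p * e `^ p + p + p * a x ^+ 2))) => //.
  - exact/measurable_EFinP.
  - move=> x Dx /=; rewrite lee_fin; apply: le_trans (h_le _ p0 e0 p2) (ler_norm _).
  - exact: intg.
have int_pb : mu.-integrable D (EFin \o (fun x => p * `|b x| `^ p)).
  apply: (@le_integrable _ _ _ mu D mD _ (EFin \o (fun x => p + p * b x ^+ 2))) => //.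
  - exact/measurable_EFinP.
  - move=> x Dx /=; rewrite lee_fin; apply: le_trans _ (ler_norm _).
    have := powR_split (b x) ltr01 p0 p2; rewrite powR1 /= mul1r => h.
    rewrite ger0_norm ?mulr_ge0 ?powR_ge0 ?(ltW p0) //; nra.
  - exact: intg.
have int_sub : mu.-integrable D (EFin \o (fun x => hfun p e (a x) - p * `|b x| `^ p)).
  have -> : EFin \o (fun x => hfun p e (a x) - p * `|b x| `^ p) =
     (fun x : T => ((hfun p e (a x))%:E - (p * `|b x| `^ p)%:E)%E).
    by apply/funext => x /=; rewrite EFinB.
  exact: (integrableB mD int_h int_pb).
have ptw : forall x, `|hfun p e (a x) - p * `|b x| `^ p| <=
    (p * e `^ p + p * dl `^ p) + p * dl `^ (p - 2) * (a x - b x) ^+ 2.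
  move=> x.
  have h1 := hbound (a x) p0 e0.
  have h2 := powR_absdiff (a x) (b x) hp.
  have h3 := powR_split (a x - b x) d0 p0 p2.
  have h4 : `|hfun p e (a x) - p * `|b x| `^ p| <=
      `|hfun p e (a x) - p * `|a x| `^ p| + p * `| `|a x| `^ p - `|b x| `^ p|.
    have := ler_normD (hfun p e (a x) - p * `|a x| `^ p) (p * (`|a x| `^ p - `|b x| `^ p)).
    rewrite normrM (gtr0_norm p0).
    have -> : hfun p e (a x) - p * `|a x| `^ p + p * (`|a x| `^ p - `|b x| `^ p)
       = hfun p e (a x) - p * `|b x| `^ p by ring.
    by [].
  rewrite /hfun in h4 h1 *; nra.
have int_g3 : mu.-integrable D (EFin \o (fun x =>
    (p * e `^ p + p * dl `^ p) + p * dl `^ (p - 2) * (a x - b x) ^+ 2)).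
  exact: intg.
have int_abs : mu.-integrable D (EFin \o (fun x => `|hfun p e (a x) - p * `|b x| `^ p|)).
  apply: (@le_integrable _ _ _ mu D mD _ (EFin \o (fun x =>
    (p * e `^ p + p * dl `^ p) + p * dl `^ (p - 2) * (a x - b x) ^+ 2))) => //.
  - apply/measurable_EFinP; apply: measurableT_comp => //.
    exact: measurable_funB.
  - move=> x Dx /=; rewrite lee_fin normr_id; exact: le_trans (ptw x) (ler_norm _).
rewrite -RintegralZl //; last first.
  apply: (@le_integrable _ _ _ mu D mD _ (EFin \o (fun x => 1 + 1 * b x ^+ 2))) => //.
  - apply/measurable_EFinP; apply: (measurableT_comp (measurable_powR _)).
    by apply: measurableT_comp.
  - move=> x Dx /=; rewrite lee_fin; apply: le_trans _ (ler_norm _).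
    have := powR_split (b x) ltr01 p0 p2; rewrite powR1 /= !mul1r => h.
    rewrite ger0_norm ?powR_ge0 //.
  - exact: intg.
rewrite -RintegralB //.
apply: le_trans (le_normr_Rintegral mD int_sub) _.
apply: le_trans (le_Rintegral mD int_abs int_g3 (fun x _ => ptw x)) _.
have ic : mu.-integrable D (EFin \o (fun _ : T => p * e `^ p + p * dl `^ p)).
  exact: cst_int.
have iz : mu.-integrable D (EFin \o (fun x : T => p * dl `^ (p - 2) * (a x - b x) ^+ 2)).
  have -> : EFin \o (fun x : T => p * dl `^ (p - 2) * (a x - b x) ^+ 2) =
    (fun x : T => ((p * dl `^ (p - 2))%:E * ((a x - b x) ^+ 2)%:E)%E).
    by apply/funext => x /=; rewrite EFinM.
  exact: integrableZl.
rewrite (RintegralD mD ic iz) Rintegral_cst // RintegralZl //.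
Qed.

Lemma box_meas (R : realType) d (a b : 'rV[R]_d) : measurable (box a b : set (Rd R d)).
Proof. apply: sub_sigma_algebra; exists a => //; exists b => //. Qed.

Lemma ball_rV (R : realType) d (x y : 'rV[R]_d) (e : R) : 0 < e ->
  (forall i, `|x ord0 i - y ord0 i| < e) -> ball x e y.
Proof.
move=> e0 H. split => // i j. rewrite (ord1 i). exact: H.
Qed.

Lemma open_meas (R : realType) d (O : set (Rd R d)) :
  open (O : set 'rV[R]_d) -> measurable O.
Proof.
move=> oO.
pose G (q : 'rV[rat]_d * 'rV[rat]_d) : set (Rd R d) :=
  let B := box (map_mx ratr q.1) (map_mx ratr q.2) in
  if pselect (B `<=` O) is left _ then B else set0.
have -> : O = \bigcup_q G q.
  apply/seteqP; split; last first.
    move=> x [q _]; rewrite /G; case: pselect => [H|//]; exact: H.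
  move=> x Ox.
  have := oO x Ox; move/nbhs_ballP => [e /= e0 sub].
  have ha : forall i : 'I_d, exists q : rat, ratr q \in `](x ord0 i - e), (x ord0 i)[.
    move=> i; apply: rat_in_itvoo; by rewrite ltrBlDr ltrDl.
  have hb : forall i : 'I_d, exists q : rat, ratr q \in `](x ord0 i), (x ord0 i + e)[.
    move=> i; apply: rat_in_itvoo; by rewrite ltrDl.
  have [fa Hfa] := choice ha. have [fb Hfb] := choice hb.
  exists (\row_i fa i, \row_i fb i) => //.
  have Hbox : box (map_mx ratr (\row_i fa i)) (map_mx ratr (\row_i fb i)) `<=` O.
    move=> y /= Hy; apply: sub; apply: ball_rV => // i.
    have := Hy i; rewrite !mxE => /andP[h1 h2].
    have := Hfa i; rewrite in_itv /= => /andP[h3 h4].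
    have := Hfb i; rewrite in_itv /= => /andP[h5 h6].
    rewrite ltr_norml; apply/andP; split; lra.
  rewrite /G; case: pselect => [_|//].
  move=> i; rewrite !mxE.
  have := Hfa i; rewrite in_itv /= => /andP[h3 h4].
  have := Hfb i; rewrite in_itv /= => /andP[h5 h6].
  apply/andP; split => //; exact: ltW.
apply: countable_bigcupT_measurable; first exact: countableP.
move=> q; rewrite /G; case: pselect => _ //; exact: box_meas.
Qed.

Lemma coord_le_norm (R : realType) d (v : 'rV[R]_d) i : `|v ord0 i| <= `|v|.
Proof.
have /mapP[j Hj ->] : `|v ord0 i| \in [seq `|v x.1 x.2| | x : 'I_1 * 'I_d].
  by apply/mapP; exists (ord0, i) => //=; rewrite mem_enum.
by rewrite [leRHS]/Num.norm /= mx_normrE; apply/bigmax_geP; right => /=; exists j.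
Qed.

Lemma muO_fin (R : realType) d (mu : {measure set (Rd R d) -> \bar R}) (O : set (Rd R d)) :
  is_lebesgue mu -> (exists M : R, forall x, O x -> `|x| <= M) -> measurable O ->
  (mu O < +oo)%E.
Proof.
move=> hl [M hM] mO.
have M0 : forall x, O x -> 0 <= M by move=> x /hM; apply: le_trans.
pose a : 'rV[R]_d := const_mx (- (`|M| + 1)).
pose b : 'rV[R]_d := const_mx (`|M| + 1).
have sub : O `<=` box a b.
  move=> x Ox i; rewrite !mxE.
  have := le_trans (@coord_le_norm R d x i) (hM x Ox).
  rewrite ler_norml => /andP[h1 h2].
  have h3 := ler_norm M. have h4 : - M <= `|M| by rewrite -normrN ler_norm.
  apply/andP; split; lra.
apply: (le_lt_trans (le_measure mu _ _ sub)); rewrite ?inE //; first exact: box_meas.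
have hab : forall i, a ord0 i <= b ord0 i.
  move=> i; rewrite !mxE; have := normr_ge0 M; lra.
by have := hl a b hab; move=> /= ->; rewrite ltry.
Qed.

Lemma eps_of_cvg (R : realType) (f : nat -> R) (y : R) : f @ \oo --> y ->
  forall e, 0 < e -> exists N, forall n, (N <= n)%N -> `|f n - y| <= e.
Proof.
move=> /cvgrPdist_le H e e0; have [N _ HN] := H e e0.
by exists N => n Nn; rewrite distrC; apply: HN.
Qed.

Lemma cvg_of_eps (R : realType) (f : nat -> R) (y : R) :
  (forall e, 0 < e -> exists N, forall n, (N <= n)%N -> `|f n - y| <= e) -> f @ \oo --> y.
Proof.
move=> H; apply/cvgrPdist_le => e e0; have [N HN] := H e e0.
by exists N => // n /= Nn; rewrite distrC; apply: HN.
Qed.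

Lemma lim_uniq (R : realType) (f : nat -> R) (y1 y2 : R) :
  f @ \oo --> y1 -> f @ \oo --> y2 -> y1 = y2.
Proof.
move=> /eps_of_cvg H1 /eps_of_cvg H2.
have : `|y1 - y2| <= 0.
  apply/ler_addgt0Pr => e e0; rewrite add0r.
  have e2 : 0 < e / 2 by rewrite divr_gt0.
  have [N1 HN1] := H1 _ e2; have [N2 HN2] := H2 _ e2.
  have h1 := HN1 (maxn N1 N2) (leq_maxl _ _).
  have h2 := HN2 (maxn N1 N2) (leq_maxr _ _).
  have := ler_normD (y1 - f (maxn N1 N2)) (f (maxn N1 N2) - y2).
  rewrite distrC in h1. have -> : y1 - f (maxn N1 N2) + (f (maxn N1 N2) - y2) = y1 - y2 by ring.
  lra.
by rewrite normr_le0 subr_eq0 => /eqP.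
Qed.

Section HilbertFacts.
Variables (R : realType) (V : lmodType R) (ip : V -> V -> R).
Hypothesis H : is_hilbert ip.

Lemma ipDl u v w : ip (u + v) w = ip u w + ip v w.
Proof. by case: H => _ [hl _]; rewrite -{1}(scale1r u) hl mul1r. Qed.

Lemma ip0l w : ip 0 w = 0.
Proof.
have := ipDl 0 0 w; rewrite addr0 => h.
by apply/eqP; rewrite -(subrr (ip 0 w)) {2}h addrK.
Qed.

Lemma ipNl u w : ip (- u) w = - ip u w.
Proof.
have := ipDl u (- u) w; rewrite subrr ip0l => h.
by apply/eqP; rewrite -subr_eq0 opprK addrC -h.
Qed.

Lemma ip_ge0 v : 0 <= ip v v.
Proof.
case: H => _ [_ [hp _]]; have [->|vn0] := eqVneq v 0; first by rewrite ip0l.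
exact/ltW/hp.
Qed.

Lemma vnorm_ge0 v : 0 <= vnorm ip v.
Proof. exact: sqrtr_ge0. Qed.

Lemma vnorm_sq v : vnorm ip v ^+ 2 = ip v v.
Proof. by rewrite /vnorm sqr_sqrtr // ip_ge0. Qed.

Lemma ip_sum_le x y : ip (x + y) (x + y) <= 2 * ip x x + 2 * ip y y.
Proof.
case: H => hs _.
have e1 : ip (x + y) (x + y) = ip x x + ip y x + ip x y + ip y y.
  have a1 : ip x (x + y) = ip x x + ip y x by rewrite hs ipDl.
  have a2 : ip y (x + y) = ip x y + ip y y by rewrite hs ipDl.
  by rewrite ipDl a1 a2; ring.
have e2 : ip (x - y) (x - y) = ip x x - ip y x - ip x y + ip y y.
  have a1 : ip x (x - y) = ip x x - ip y x by rewrite hs ipDl ipNl.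
  have a2 : ip y (x - y) = ip x y - ip y y by rewrite hs ipDl ipNl.
  by rewrite ipDl ipNl a1 a2; ring.
have := ip_ge0 (x - y); lra.
Qed.

End HilbertFacts.

Lemma dual_sub (R : realType) (V : lmodType R) (ip : V -> V -> R) (f : V -> R) u v :
  in_dual ip f -> f (u - v) = f u - f v.
Proof. by case=> hl _; rewrite addrC -scaleN1r hl mulN1r addrC. Qed.

Unset Implicit Arguments.

Theorem lemma5p5 (R : realType) (d : nat)
    (mu : {measure set (Rd R d) -> \bar R}) (O : set (Rd R d))
    (V : lmodType R) (ip : V -> V -> R) (iota : V -> Rd R d -> R)
    (F : V -> R) (alpha beta p : R)
    (ubar : V) (rho : R) (eps : nat -> R) (u : nat -> V) (lbar : V -> R) :
  is_lebesgue mu ->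
  bounded_lipschitz_domain (O : set 'rV[R]_d) ->
  is_hilbert ip ->
  compact_dense_embedding mu O ip iota ->
  weakly_lsc ip F -> bounded_below_affine ip F -> C1_frechet ip F ->
  0 < alpha -> 0 < beta -> 0 < p < 1 ->
  0 < rho ->
  local_solution mu O ip iota p F alpha beta ubar rho ->
  (forall k, 0 < eps k) -> eps @ \oo --> (0 : R) ->
  (forall k, reg_global_solution mu O ip iota p F alpha beta
               (eps k) ubar rho (u k)) ->
  (fun k => vnorm ip (u k - ubar)) @ \oo --> (0 : R) ->
  in_dual ip lbar ->
  dual_cvg ip (fun k => lam mu O iota p (eps k) (u k)) lbar ->
  (fun k => lam mu O iota p (eps k) (u k) (u k)) @ \oo --> lbar ubar /\
  lbar ubar = p * \int[mu]_(x in O) (`|iota ubar x| `^ p).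
Proof.
move=> hleb [oO [bO _]] hH [hL2 [hlin [_ [[Cv hCv] _]]]] _ _ _ _ _ /andP[p0 p1]
  _ _ eps0 epsc _ uc ldual ldc.
have mO : measurable O := open_meas oO.
have muO := muO_fin hleb bO mO.
have iota_sub : forall v w x, iota (v - w) x = iota v x - iota w x.
  by move=> v w x; rewrite addrC -scaleN1r hlin mulN1r addrC.
have vn0 := vnorm_ge0 ip.
pose L := fun k => lam mu O iota p (eps k) (u k) (u k).
have cvgA : L @ \oo --> lbar ubar.
  apply: cvg_of_eps => e e0.
  have [_ [Cl hCl]] := ldual.
  pose Bd := 1 + 2 * (1 + ip ubar ubar).
  have ipb := ip_ge0 hH ubar.
  have Bd0 : 0 < Bd by rewrite /Bd; lra.
  have Cl1 : 0 < `|Cl| + 1 by have := normr_ge0 Cl; lra.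
  pose e1 := Num.min 1 (e / (2 * (`|Cl| + 1))).
  have e10 : 0 < e1 by rewrite lt_min ltr01 /= divr_gt0 // mulr_gt0.
  have [N1 HN1] := eps_of_cvg uc e10.
  have e20 : 0 < e / (2 * Bd) by rewrite divr_gt0 // mulr_gt0.
  have [N2 HN2] := ldc _ e20.
  exists (maxn N1 N2) => k Nk.
  have hw : vnorm ip (u k - ubar) <= e1.
    have := HN1 k (leq_trans (leq_maxl _ _) Nk).
    by rewrite subr0 ger0_norm.
  move: hw; rewrite le_min => /andP[hw1 hw2].
  have hub : vnorm ip (u k) <= Bd.
    have t1 : vnorm ip (u k) <= 1 + vnorm ip (u k) ^+ 2 by have := vn0 (u k); nra.
    have t2 := ip_sum_le hH (u k - ubar) ubar.
    rewrite subrK in t2.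
    have t3 : ip (u k - ubar) (u k - ubar) <= 1.
      rewrite -(vnorm_sq hH); have := vn0 (u k - ubar); nra.
    rewrite (vnorm_sq hH) in t1; rewrite /Bd; lra.
  have h1 := HN2 k (leq_trans (leq_maxr _ _) Nk) (u k).
  have h1' : `|lam mu O iota p (eps k) (u k) (u k) - lbar (u k)| <= e / 2.
    apply: le_trans h1 _.
    have -> : e / 2 = e / (2 * Bd) * Bd by field; lra.
    by rewrite ler_wpM2l // ltW.
  have h2 : `|lbar (u k) - lbar ubar| <= e / 2.
    rewrite -(dual_sub _ _ ldual); apply: le_trans (hCl _) _.
    apply: le_trans (_ : `|Cl| * vnorm ip (u k - ubar) <= _).
      by rewrite ler_wpM2r // ler_norm.
    have -> : e / 2 = (`|Cl| + 1) * (e / (2 * (`|Cl| + 1))) by field; lra.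
    apply: le_trans (_ : (`|Cl| + 1) * vnorm ip (u k - ubar) <= _).
      by rewrite ler_wpM2r // lerDl.
    by rewrite ler_wpM2l // ltW.
  have := ler_normD (lam mu O iota p (eps k) (u k) (u k) - lbar (u k)) (lbar (u k) - lbar ubar).
  rewrite /L; have -> : lam mu O iota p (eps k) (u k) (u k) - lbar (u k) + (lbar (u k) - lbar ubar)
    = lam mu O iota p (eps k) (u k) (u k) - lbar ubar by ring.
  lra.
pose S := p * \int[mu]_(x in O) (`|iota ubar x| `^ p).
have cvgB : L @ \oo --> S.
  apply: cvg_of_eps => ep ep0.
  pose m := fine (mu O).
  have m0 : 0 <= m by apply: fine_ge0; exact: measure_ge0.
  pose t := ep / (3 * (p * (m + 1))).
  have t0 : 0 < t by rewrite divr_gt0 // mulr_gt0 // mulr_gt0 //; lra.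
  pose dl := t `^ (p^-1).
  have dl0 : 0 < dl by apply: powR_gt0.
  have dlp : dl `^ p = t.
    by rewrite /dl -powRrM mulVf ?gt_eqF // powRr1 // ltW.
  have dlq0 : 0 < dl `^ (p - 2) by apply: powR_gt0.
  pose K := p * dl `^ (p - 2) * (`|Cv| + 1).
  have K0 : 0 < K by rewrite /K mulr_gt0 ?mulr_gt0 //; have := normr_ge0 Cv; lra.
  have [N1 HN1] := eps_of_cvg epsc dl0.
  have e20 : 0 < Num.min 1 (ep / (3 * K)) by rewrite lt_min ltr01 /= divr_gt0 // mulr_gt0.
  have [N2 HN2] := eps_of_cvg uc e20.
  exists (maxn N1 N2) => k Nk.
  have hek : eps k <= dl.
    have := HN1 k (leq_trans (leq_maxl _ _) Nk).
    by rewrite subr0 ger0_norm // ltW.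
  have hekp : eps k `^ p <= t.
    rewrite -dlp; apply: (ge0_ler_powR (ltW p0)) => //; rewrite nnegrE ltW //.
  have hw : vnorm ip (u k - ubar) <= Num.min 1 (ep / (3 * K)).
    have := HN2 k (leq_trans (leq_maxr _ _) Nk).
    by rewrite subr0 ger0_norm.
  move: hw; rewrite le_min => /andP[hw1 hw2].
  have [ma ia] := hL2 (u k).
  have [mb ib] := hL2 ubar.
  have [_ iab] := hL2 (u k - ubar).
  have ef : iota (u k - ubar) = (fun x => iota (u k) x - iota ubar x).
    by apply/funext => x; rewrite iota_sub.
  rewrite ef in iab.
  have E := est mO muO p0 (ltW p1) (eps0 k) dl0 ma mb ia ib iab.
  have E2 : \int[mu]_(x in O) ((iota (u k) x - iota ubar x) ^+ 2)
      <= `|Cv| * vnorm ip (u k - ubar) ^+ 2.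
    have := hCv (u k - ubar); rewrite /L2norm2 ef => h; apply: le_trans h _.
    by rewrite ler_wpM2r ?sqr_ge0 // ler_norm.
  have E3 : p * dl `^ (p - 2) * \int[mu]_(x in O) ((iota (u k) x - iota ubar x) ^+ 2)
      <= ep / 3.
    apply: le_trans (_ : p * dl `^ (p - 2) * (`|Cv| * vnorm ip (u k - ubar) ^+ 2) <= _).
      by rewrite ler_wpM2l // mulr_ge0 // ltW.
    have vv : vnorm ip (u k - ubar) ^+ 2 <= vnorm ip (u k - ubar).
      have := vn0 (u k - ubar); nra.
    apply: le_trans (_ : K * vnorm ip (u k - ubar) <= _).
      rewrite /K -!mulrA; apply: ler_wpM2l; first exact: ltW.
      apply: ler_wpM2l; first exact: ltW.
      have := normr_ge0 Cv; have := vn0 (u k - ubar); nra.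
    have -> : ep / 3 = K * (ep / (3 * K)) by field; lra.
    by rewrite ler_wpM2l // ltW.
  have E4 : (p * eps k `^ p + p * dl `^ p) * m <= 2 * ep / 3.
    rewrite dlp.
    have : p * eps k `^ p + p * t <= 2 * (p * t) by have := ltW p0; nra.
    have -> : p * t = ep / (3 * (m + 1)) by rewrite /t; field; lra.
    move=> h.
    apply: le_trans (_ : 2 * (ep / (3 * (m + 1))) * m <= _); first by rewrite ler_wpM2r.
    have m1 : 0 < m + 1 by lra.
    have -> : 2 * (ep / (3 * (m + 1))) * m = 2 * ep / 3 * (m / (m + 1)) by field; lra.
    rewrite ger_pMr ?divr_gt0 //; last by lra.
    by rewrite ler_pdivrMr // mul1r lerDl.
  rewrite /L /S; apply: le_trans E _; move: E4; rewrite /m => E4; lra.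
split; first exact: cvgA.
exact: (lim_uniq cvgA cvgB).
Qed.
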